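(* The graph $(C_3\cup P_2)+C_3$ is 1-planar.
   Context: A graph is 1-planar if it has a drawing in the plane in which each edge is crossed at most once. The join $G+H$ is obtained from vertex-disjoint copies of $G$ and $H$ by adding all edges between $V(G)$ and $V(H)$. $C_3$ is the triangle, $P_2$ is a single edge, $\cup$ is disjoint union. *)

(* Defs.v *)
From mathcomp Require Import all_boot.
From Stdlib Require Import Reals.

Set Implicit Arguments. Unset Strict Implicit. Unset Printing Implicit Defensive.

(* A (simple) graph is given by a finite vertex type and an adjacency relation
   (symmetric, irreflexive for all graphs built below). *)

Definition C3 : rel 'I_3 := fun i j => i != j.
Definition P2 : rel 'I_2 := fun i j => i != j.

Definition gunion (T1 T2 : finType) (r1 : rel T1) (r2 : rel T2) : rel (T1 + T2) :=
  fun x y => match x, y with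
             | inl a, inl b => r1 a b
             | inr a, inr b => r2 a b
             | _, _ => false
             end.

Definition gjoin (T1 T2 : finType) (r1 : rel T1) (r2 : rel T2) : rel (T1 + T2) :=
  fun x y => match x, y with
             | inl a, inl b => r1 a b
             | inr a, inr b => r2 a b
             | _, _ => true
             end.

Definition point := (R * R)%type.

Definition cont_arc (g : R -> point) : Prop :=
  forall t, continuity_pt (fun s => fst (g s)) t /\ continuity_pt (fun s => snd (g s)) t.

Definition same_edge (T : Type) (u v x y : T) : Prop :=
  (u = x /\ v = y) \/ (u = y /\ v = x).

(* Vertices are distinct points p x; the edge {x,y} is the
   simple arc gamma x y restricted to [0,1] (gamma y x is the same arc traversed
   backwards), joining p x to p y, whose interior avoids all vertex points.
   One-planarity condition: for every edge, there is at most one pair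
   (other edge, point) where an interior point of the edge lies on the interior
   of another edge (so the edge meets the other edges in at most one point,
   and that point lies on only one other edge). *)
Definition one_planar_drawing (T : finType) (e : rel T)
    (p : T -> point) (gamma : T -> T -> R -> point) : Prop :=
  (forall x y, p x = p y -> x = y) /\
  (forall x y, e x y ->
     cont_arc (gamma x y) /\
     gamma x y 0%R = p x /\ gamma x y 1%R = p y /\
     (forall t, (0 <= t <= 1)%R -> gamma y x t = gamma x y (1 - t)%R) /\
     (forall t s, (0 <= t <= 1)%R -> (0 <= s <= 1)%R ->
        gamma x y t = gamma x y s -> t = s) /\
     (forall z t, (0 < t < 1)%R -> gamma x y t <> p z)) /\
  (forall x y u v u' v' t s t' s',
     e x y -> e u v -> e u' v' ->
     ~ same_edge u v x y -> ~ same_edge u' v' x y ->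
     (0 < t < 1)%R -> (0 < s < 1)%R -> (0 < t' < 1)%R -> (0 < s' < 1)%R ->
     gamma x y t = gamma u v s -> gamma x y t' = gamma u' v' s' ->
     t = t' /\ same_edge u v u' v').

Definition one_planar (T : finType) (e : rel T) : Prop :=
  exists p gamma, @one_planar_drawing T e p gamma.

(* Main.v *)
Require Import Defs.
From mathcomp Require Import all_boot.
From Stdlib Require Import Reals.
From Stdlib Require Import Lra.
Open Scope R_scope.

Definition T : finType := (('I_3 + 'I_2) + 'I_3)%type.
Definition idx (x : T) : nat :=
  match x with inl (inl i) => val i | inl (inr i) => (3 + val i)%nat | inr i => (5 + val i)%nat end.

Definition pt (n : nat) : point := match n with
  | 0%nat => (12,11)
  | 1%nat => (3,0)
  | 2%nat => (1,10)
  | 3%nat => (5,7)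
  | 4%nat => (6,7)
  | 5%nat => (6,4)
  | 6%nat => (10,9)
  | _ => (4,9) end.
Definition p (x : T) : point := pt (idx x).
Definition gamma (x y : T) (t : R) : point :=
  (fst (p x) + t * (fst (p y) - fst (p x)), snd (p x) + t * (snd (p y) - snd (p x))).
Definition G := gjoin (gunion C3 P2) C3.

Definition v0 : T := inl (inl (@Ordinal 3 0%nat isT)).
Definition v1 : T := inl (inl (@Ordinal 3 1%nat isT)).
Definition v2 : T := inl (inl (@Ordinal 3 2%nat isT)).
Definition v3 : T := inl (inr (@Ordinal 2 0%nat isT)).
Definition v4 : T := inl (inr (@Ordinal 2 1%nat isT)).
Definition v5 : T := inr (@Ordinal 3 0%nat isT).
Definition v6 : T := inr (@Ordinal 3 1%nat isT).
Definition v7 : T := inr (@Ordinal 3 2%nat isT).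
Definition vt (n : nat) : T := match n with
  | 0%nat => v0
  | 1%nat => v1
  | 2%nat => v2
  | 3%nat => v3
  | 4%nat => v4
  | 5%nat => v5
  | 6%nat => v6
  | _ => v7 end.
Definition crt (x y : T) : R := match idx x, idx y with
  | 0%nat, 5%nat => (4/5)
  | 0%nat, 7%nat => (10/13)
  | 1%nat, 6%nat => (3/5)
  | 1%nat, 7%nat => (38/51)
  | 2%nat, 5%nat => (28/51)
  | 2%nat, 6%nat => (7/13)
  | 3%nat, 6%nat => (1/7)
  | 4%nat, 7%nat => (1/7)
  | 5%nat, 0%nat => (1/5)
  | 5%nat, 2%nat => (23/51)
  | 6%nat, 1%nat => (2/5)
  | 6%nat, 2%nat => (6/13)
  | 6%nat, 3%nat => (6/7)
  | 7%nat, 0%nat => (3/13)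
  | 7%nat, 1%nat => (13/51)
  | 7%nat, 4%nat => (6/7)
  | _, _ => 0 end.
Definition cru (x y : T) : T := match idx x, idx y with
  | 0%nat, 5%nat => v1
  | 0%nat, 7%nat => v2
  | 1%nat, 6%nat => v0
  | 1%nat, 7%nat => v2
  | 2%nat, 5%nat => v1
  | 2%nat, 6%nat => v0
  | 3%nat, 6%nat => v4
  | 4%nat, 7%nat => v3
  | 5%nat, 0%nat => v1
  | 5%nat, 2%nat => v1
  | 6%nat, 1%nat => v0
  | 6%nat, 2%nat => v0
  | 6%nat, 3%nat => v4
  | 7%nat, 0%nat => v2
  | 7%nat, 1%nat => v2
  | 7%nat, 4%nat => v3
  | _, _ => v0 end.
Definition crv (x y : T) : T := match idx x, idx y with
  | 0%nat, 5%nat => v6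
  | 0%nat, 7%nat => v6
  | 1%nat, 6%nat => v5
  | 1%nat, 7%nat => v5
  | 2%nat, 5%nat => v7
  | 2%nat, 6%nat => v7
  | 3%nat, 6%nat => v7
  | 4%nat, 7%nat => v6
  | 5%nat, 0%nat => v6
  | 5%nat, 2%nat => v7
  | 6%nat, 1%nat => v5
  | 6%nat, 2%nat => v7
  | 6%nat, 3%nat => v7
  | 7%nat, 0%nat => v6
  | 7%nat, 1%nat => v5
  | 7%nat, 4%nat => v6
  | _, _ => v0 end.

Lemma T_ind (P : T -> Prop) : P v0 -> P v1 -> P v2 -> P v3 -> P v4 -> P v5 -> P v6 -> P v7 -> forall x, P x.
Proof.
move=> H0 H1 H2 H3 H4 H5 H6 H7 [[[i Hi]|[i Hi]]|[i Hi]].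
- case: i Hi => [|[|[|i]]] Hi; [rewrite (eq_irrelevance Hi isT) //..|by []].
- case: i Hi => [|[|i]] Hi; [rewrite (eq_irrelevance Hi isT) //..|by []].
- case: i Hi => [|[|[|i]]] Hi; [rewrite (eq_irrelevance Hi isT) //..|by []].
Qed.

Ltac Gfalse H := (try (exfalso; move: H; rewrite /G /=; by [])).

Lemma p_inj x y : p x = p y -> x = y.
Proof.
elim/T_ind: y; elim/T_ind: x; rewrite /p /=; move=> H; (try reflexivity); case: H => *; lra.
Qed.

Lemma key x y u v t s : G x y -> G u v -> ~ same_edge u v x y -> (0 < t < 1) -> (0 < s < 1) ->
  gamma x y t = gamma u v s -> t = crt x y /\ same_edge u v (cru x y) (crv x y).
Proof.
elim/T_ind: v; elim/T_ind: u; elim/T_ind: y; elim/T_ind: x; move=> Gxy Guv; Gfalse Gxy; Gfalse Guv;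
  move=> Hse Ht Hs; (try (exfalso; apply: Hse; by [left; split | right; split]));
  rewrite /gamma /p /crt /cru /crv /= => Heq; case: Heq => E1 E2;
  first [ by exfalso; lra | by split; [lra | left; split] | by split; [lra | right; split] ].
Qed.


Lemma cont x y : cont_arc (gamma x y).
Proof.
move=> t; rewrite /gamma /=; split;
 (apply: continuity_pt_plus; [apply: continuity_pt_const => ? ? //|
   apply: continuity_pt_mult; [exact: (derivable_continuous_pt _ _ (derivable_pt_id t))|apply: continuity_pt_const => ? ? //]]).
Qed.

Lemma g0 x y : gamma x y 0 = p x.
Proof. rewrite /gamma; case: (p x) => a b; case: (p y) => c d /=; f_equal; ring. Qed.
Lemma g1 x y : gamma x y 1 = p y.
Proof. rewrite /gamma; case: (p x) => a b; case: (p y) => c d /=; f_equal; ring. Qed.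
Lemma gsym x y t : gamma y x t = gamma x y (1 - t).
Proof. rewrite /gamma; case: (p x) => a b; case: (p y) => c d /=; f_equal; ring. Qed.

Lemma ginj x y t s : G x y -> gamma x y t = gamma x y s -> t = s.
Proof.
elim/T_ind: y; elim/T_ind: x; move=> Gxy; Gfalse Gxy; rewrite /gamma /p /= => Heq; case: Heq => *; lra.
Qed.

Lemma gavoid x y z t : G x y -> (0 < t < 1) -> gamma x y t <> p z.
Proof.
elim/T_ind: z; elim/T_ind: y; elim/T_ind: x; move=> Gxy; Gfalse Gxy; move=> Ht;
  rewrite /gamma /p /= => Heq; case: Heq => *; lra.
Qed.

Lemma se_trans (a b c d a' b' : T) : same_edge a b c d -> same_edge a' b' c d -> same_edge a b a' b'.
Proof. rewrite /same_edge; intuition subst; tauto. Qed.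

Theorem lemma13 : one_planar (gjoin (gunion C3 P2) C3).
Proof.
exists p, gamma; split; [exact: p_inj|split].
- move=> x y Gxy; split; [exact: cont|split; [exact: g0|split; [exact: g1|split]]].
  + move=> t _; exact: gsym.
  + split; [move=> t s _ _; exact: ginj|move=> z t; exact: gavoid].
- move=> x y u v u' v' t s t' s' Gxy Guv Guv' Hse Hse' Ht Hs Ht' Hs' E1 E2.
  have [-> A] := key x y u v t s Gxy Guv Hse Ht Hs E1.
  have [-> B] := key x y u' v' t' s' Gxy Guv' Hse' Ht' Hs' E2.
  split; [by []|exact: se_trans A B].
Qed.
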